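(* Let $K\ge2$ and $\tilde a_1,\dots,\tilde a_K\in\mathbb{R}$ satisfy $\sum_{j=i}^K\tilde a_j>0$ for all $i\in\{1,\dots,K\}$. There are $t_0,D_3\in(0,\infty)$ such that for every $t\in[t_0,\infty)$, every admissible $n$ and every $\mathbf z\in G^n$, $$\mathbb{E}_{\mathbf z}|\hat{\mathbf Z}^n(|\mathbf z|t)|^2\le D_3\Big(t|\mathbf z|+\frac{1+t^2(|\mathbf z|^2+1)}{n}\Big).$$
   Context: Only integers $n>\max_l(\max(\tilde a_l,0))^2$ are considered. Let $A_1,\dots,A_K,D_1,\dots,D_K$ be mutually independent rate-one Poisson processes. The ranked queue-length process $\mathbf X^n=(X^n_1,\dots,X^n_K)'$ (with $X^n_1(0)\le\dots\le X^n_K(0)$ nonnegative integers) solves $$X^n_i(t)=X^n_i(0)+A_i\Big(n\int_0^t\alpha^n_i(s)\mathbf 1_{\{X^n_i(s)<X^n_{i+1}(s)\}}ds\Big)-D_i\Big(n\int_0^t\delta^n_i(s)\mathbf 1_{\{X^n_i(s)>X^n_{i-1}(s)\}}ds\Big),$$ with $X^n_0\equiv0$, $X^n_{K+1}\equiv\infty$, $\delta^n_i(t)=\sum_{j}\mathbf 1_{\{X^n_j(t)=X^n_i(t)\}}$, $\alpha^n_i(t)=\sum_j(1-\tilde a_jn^{-1/2})\mathbf 1_{\{X^n_j(t)=X^n_i(t)\}}$. The gap process $\hat{\mathbf Z}^n(t)=n^{-1/2}(X^n_1(t),X^n_2(t)-X^n_1(t),\dots,X^n_K(t)-X^n_{K-1}(t))'$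 is a Markov process on $G^n=n^{-1/2}\mathbb{N}_0^K$; $\mathbb{E}_{\mathbf z}$ denotes expectation when $\hat{\mathbf Z}^n(0)=\mathbf z$. $|\cdot|$ is the Euclidean norm. *)

(* Defs.v *)
From HB Require Import structures.
From mathcomp Require Import all_boot all_order all_algebra.
From mathcomp Require Import all_classical all_reals all_analysis.
Set Implicit Arguments. Unset Strict Implicit. Unset Printing Implicit Defensive.
Import Order.TTheory GRing.Theory Num.Theory.
Local Open Scope ring_scope.

(* Queues are indexed 0..K-1 (paper: 1..K); a : nat -> R is
   (ã_1,...,ã_K) shifted to indices 0..K-1.  A state of the gap chain is
   m : nat -> nat with m j = 0 for j >= K; it represents
   Ẑ^n = n^{-1/2} (m 0, ..., m (K-1)) in G^n, i.e. m = sqrt n * Ẑ^n.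
   The ranked queue lengths are the partial sums X_i = m 0 + ... + m i. *)

Section GapChain.
Variables (R : realType) (K : nat) (a : nat -> R) (n : nat).

Definition Xq (m : nat -> nat) (i : nat) : nat := (\sum_(j < i.+1) m j)%N.

(* indicator 1{X_i < X_{i+1}}, with X_{K+1} = +oo *)
Definition arr_ok (m : nat -> nat) (i : nat) : bool :=
  (i.+1 < K)%N ==> (Xq m i < Xq m i.+1)%N.

Definition dep_ok (m : nat -> nat) (i : nat) : bool :=
  if i is i'.+1 then (Xq m i' < Xq m i)%N else (0 < Xq m 0)%N.

Definition alpha (m : nat -> nat) (i : nat) : R :=
  \sum_(j < K | Xq m j == Xq m i) (1 - a j / Num.sqrt (n%:R)).
Definition delta (m : nat -> nat) (i : nat) : R :=
  \sum_(j < K | Xq m j == Xq m i) 1.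

Definition arr_rate (m : nat -> nat) (i : nat) : R :=
  n%:R * alpha m i * (arr_ok m i)%:R.
Definition dep_rate (m : nat -> nat) (i : nat) : R :=
  n%:R * delta m i * (dep_ok m i)%:R.

(* effect on the gap vector of X_i -> X_i + 1, resp. X_i -> X_i - 1 *)
Definition arr_move (m : nat -> nat) (i : nat) : nat -> nat :=
  fun j => if j == i then (m j + 1)%N
           else if (j == i.+1) && (j < K)%N then (m j - 1)%N else m j.
Definition dep_move (m : nat -> nat) (i : nat) : nat -> nat :=
  fun j => if j == i then (m j - 1)%N
           else if (j == i.+1) && (j < K)%N then (m j + 1)%N else m j.

(* uniformization constant: an upper bound of the total jump rate
   for every admissible n *)
Definition Lam : R := n%:R * (2 * K%:R + \sum_(j < K) `|a j|) + 1.

Definition step (f : (nat -> nat) -> R) (m : nat -> nat) : R :=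
  \sum_(i < K) (arr_rate m i / Lam * f (arr_move m i)
                + dep_rate m i / Lam * f (dep_move m i))
  + (1 - \sum_(i < K) (arr_rate m i + dep_rate m i) / Lam) * f m.

(* E_m f(state at time t) for the continuous-time Markov chain with the
   above jump rates, via uniformization:
   sum_k e^{-Lam t} (Lam t)^k / k! (P^k f)(m).  Extended-real valued. *)
Definition Ezt (t : R) (f : (nat -> nat) -> R) (m : nat -> nat) : \bar R :=
  (\sum_(0 <= k <oo)
     ((expR (- (Lam * t)) * (Lam * t) ^+ k / (k`!)%:R) * iter k step f m)%:E)%E.

Definition zsq (m : nat -> nat) : R := (\sum_(j < K) ((m j)%:R ^+ 2)) / n%:R.
Definition znorm (m : nat -> nat) : R := Num.sqrt (zsq m).

End GapChain.

(* Main.v *)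
Require Import Defs.
From HB Require Import structures.
From mathcomp Require Import all_boot all_order all_algebra.
From mathcomp Require Import all_classical all_reals all_analysis.
From mathcomp Require Import zify ring lra.
Import Order.TTheory GRing.Theory Num.Theory.
Local Open Scope ring_scope.


Section Comb.
Variable K : nat.

Lemma XqS m i : Xq m i.+1 = (Xq m i + m i.+1)%N.
Proof. by rewrite /Xq big_ord_recr. Qed.

Lemma Xq0 m : Xq m 0 = m 0.
Proof. by rewrite /Xq big_ord_recr big_ord0. Qed.

Lemma Xq_mono m i j : (i <= j)%N -> (Xq m i <= Xq m j)%N.
Proof.
move=> /subnKC <-; elim: (j - i)%N => [|d IH]; first by rewrite addn0.
by rewrite addnS XqS (leq_trans IH) // leq_addr.
Qed.
Arguments Xq_mono m {i j}.

Lemma arr_exists m j : (j < K)%N ->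
  exists i, [/\ (i < K)%N, arr_ok K m i & Xq m i = Xq m j].
Proof.
move=> jK.
suff H : forall d j', (K <= j' + d.+1)%N -> (j' < K)%N -> Xq m j' = Xq m j ->
   exists i, [/\ (i < K)%N, arr_ok K m i & Xq m i = Xq m j].
  by apply: (H K j) => //; lia.
elim=> [|d IH] j' hd hj' he.
  exists j'; split => //; rewrite /arr_ok; apply/implyP => h; lia.
case ok: (arr_ok K m j'); first by exists j'.
move: ok; rewrite /arr_ok => /negbT; rewrite negb_imply => /andP[h1 h2].
have h3 := Xq_mono m (leqnSn j').
apply: (IH j'.+1) => //; first lia.
rewrite -he; apply/eqP; rewrite eq_sym eqn_leq h3 /=; by rewrite leqNgt.
Qed.

Lemma arr_uniq m i i' : (i < K)%N -> (i' < K)%N -> arr_ok K m i -> arr_ok K m i' ->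
  Xq m i = Xq m i' -> i = i'.
Proof.
wlog: i i' / (i <= i')%N.
  move=> H hi hi' o o' e; case: (leqP i i') => c; first exact: H.
  by symmetry; apply: H => //; exact: ltnW.
move=> le hi hi' o o' e; apply/eqP; rewrite eqn_leq le /= leqNgt; apply/negP => lt.
have h1 : (i.+1 < K)%N by lia.
move: o; rewrite /arr_ok h1 /= => o.
have := Xq_mono m lt; lia.
Qed.

Lemma dep_ok_pos m i : dep_ok m i -> (0 < Xq m i)%N.
Proof. by case: i => [|i] //= h; apply: leq_ltn_trans h. Qed.

Lemma dep_exists m j : (0 < Xq m j)%N ->
  exists i, [/\ (i <= j)%N, dep_ok m i & Xq m i = Xq m j].
Proof.
elim: j => [|j IH] h; first by exists 0%N.
case ok: (dep_ok m j.+1); first by exists j.+1.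
move: ok => /= /negbT; rewrite -leqNgt => le.
have e : Xq m j = Xq m j.+1 by apply/eqP; rewrite eqn_leq le Xq_mono.
have [i [h1 h2 h3]] : exists i, [/\ (i <= j)%N, dep_ok m i & Xq m i = Xq m j].
  by apply: IH; rewrite e.
by exists i; split => //; [exact: leqW | rewrite h3].
Qed.

Lemma dep_uniq m i i' : dep_ok m i -> dep_ok m i' -> Xq m i = Xq m i' -> i = i'.
Proof.
wlog: i i' / (i <= i')%N.
  move=> H o o' e; case: (leqP i i') => c; first exact: H.
  by symmetry; apply: H => //; exact: ltnW.
move=> le o o' e; apply/eqP; rewrite eqn_leq le /= leqNgt; apply/negP => lt.
case: i' lt o' e le => [|i'] // lt o' e le.
move: o' => /= o'.
have := Xq_mono m (lt : (i <= i')%N); lia.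
Qed.

Lemma count_arr (R : realType) m j : (j < K)%N ->
  \sum_(i < K) ((arr_ok K m i && (Xq m i == Xq m j)))%:R = (1 : R).
Proof.
move=> jK; have [i0 [h0 o0 e0]] := @arr_exists m j jK.
rewrite (bigD1 (Ordinal h0)) //= ?o0 ?e0 ?eqxx //= big1 ?addr0 //.
move=> i ne; case: (boolP (arr_ok K m i)) => oi //=.
case: eqP => // ei; exfalso; move: ne => /eqP; apply; apply: val_inj => /=.
apply: (@arr_uniq m i i0 (ltn_ord i) h0 oi o0); by rewrite ei e0.
Qed.

Lemma count_dep (R : realType) m j : (j < K)%N ->
  \sum_(i < K) ((dep_ok m i && (Xq m i == Xq m j)))%:R = ((0 < Xq m j)%N%:R : R).
Proof.
move=> jK; case: (posnP (Xq m j)) => [z|p].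
  rewrite big1 //= => i _; case: (boolP (dep_ok m i)) => oi //=.
  by rewrite z; have := @dep_ok_pos m i oi; case: (Xq m i).
have [i0 [h1 o0 e0]] := @dep_exists m j p.
have h0 : (i0 < K)%N by apply: leq_ltn_trans jK.
rewrite (bigD1 (Ordinal h0)) /= ?o0 ?e0 ?eqxx //= big1 ?addr0 //.
move=> i ne; case: (boolP (dep_ok m i)) => oi //=.
case: eqP => // ei; exfalso; move: ne => /eqP; apply; apply: val_inj => /=.
apply: (@dep_uniq m i i0 oi o0); by rewrite ei e0.
Qed.

End Comb.


Section Moves.
Variable K : nat.

Lemma arr_ok_m m i : arr_ok K m i -> (i.+1 < K)%N -> (0 < m i.+1)%N.
Proof. rewrite /arr_ok => /implyP h /h; rewrite XqS; lia. Qed.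
Arguments arr_ok_m {m i}.

Lemma dep_ok_m m i : dep_ok m i -> (0 < m i)%N.
Proof. case: i => [|i] /=; rewrite ?Xq0 ?XqS //; lia. Qed.
Arguments dep_ok_m {m i}.

Lemma Xq_arr m i p : arr_ok K m i -> (p < K)%N ->
  Xq (arr_move K m i) p = (Xq m p + (p == i))%N.
Proof.
move=> o; elim: p => [|p IH] hp.
  rewrite !Xq0 /arr_move; case: (eqVneq 0%N i) => [e|ne] //=.
  by rewrite addn0.
rewrite !XqS IH ?(ltnW hp) // /arr_move.
case: (eqVneq p.+1 i) => [e|ne].
  subst i; rewrite (ltn_eqF (ltnSn p)); lia.
case: (eqVneq p i) => [e'|ne'].
  subst i; rewrite eqxx hp /=; have := arr_ok_m o hp; lia.
rewrite eqSS (negbTE ne') /=; lia.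
Qed.

Lemma Xq_dep m i p : dep_ok m i -> (p < K)%N ->
  (Xq (dep_move K m i) p + (p == i))%N = Xq m p.
Proof.
move=> o; have mpos := dep_ok_m o.
elim: p => [|p IH] hp.
  rewrite !Xq0 /dep_move; case: (eqVneq 0%N i) => [e|ne] //=.
    subst i; rewrite ?eqxx /= subnK //.
  by rewrite addn0.
have := IH (ltnW hp); rewrite !XqS /dep_move.
case: (eqVneq p.+1 i) => [e|ne].
  subst i; rewrite (ltn_eqF (ltnSn p)); lia.
case: (eqVneq p i) => [e'|ne'].
  subst i; rewrite eqxx hp /=; lia.
rewrite eqSS (negbTE ne') /=; lia.
Qed.
Arguments Xq_dep {m i p}.

Variable R : realType.

Definition Xr (m : nat -> nat) (i : nat) : R := (Xq m i)%:R.
Definition Phi m := \sum_(p < K) Xr m p ^+ 2.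

Lemma ord_neq_nat (p : 'I_K) i (iK : (i < K)%N) : p != Ordinal iK -> ((p : nat) == i) = false.
Proof. move=> ne; apply/negbTE; apply: contra ne => /eqP e; apply/eqP; exact: val_inj. Qed.

Lemma sum_sq_shift (x : nat -> R) i : (i < K)%N ->
  \sum_(p < K) (x p + ((p : nat) == i)%:R) ^+ 2 = \sum_(p < K) x p ^+ 2 + 2 * x i + 1.
Proof.
move=> iK; rewrite (bigD1 (Ordinal iK)) //= eqxx [in RHS](bigD1 (Ordinal iK)) //=.
rewrite (eq_bigr (fun p : 'I_K => x p ^+ 2)); last first.
  by move=> p ne; rewrite ord_neq_nat // addr0.
rewrite /=; ring.
Qed.

Lemma sum_sq_shiftN (x : nat -> R) i : (i < K)%N ->
  \sum_(p < K) (x p - ((p : nat) == i)%:R) ^+ 2 = \sum_(p < K) x p ^+ 2 - 2 * x i + 1.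
Proof.
move=> iK; rewrite (bigD1 (Ordinal iK)) //= eqxx [in RHS](bigD1 (Ordinal iK)) //=.
rewrite (eq_bigr (fun p : 'I_K => x p ^+ 2)); last first.
  by move=> p ne; rewrite ord_neq_nat // subr0.
rewrite /=; ring.
Qed.

Lemma Phi_arr m i : arr_ok K m i -> (i < K)%N ->
  Phi (arr_move K m i) = Phi m + 2 * Xr m i + 1.
Proof.
move=> o iK; rewrite /Phi -sum_sq_shift //; apply: eq_bigr => p _.
by rewrite /Xr Xq_arr // natrD.
Qed.

Lemma Phi_dep m i : dep_ok m i -> (i < K)%N ->
  Phi (dep_move K m i) = Phi m - 2 * Xr m i + 1.
Proof.
move=> o iK; rewrite /Phi -sum_sq_shiftN //; apply: eq_bigr => p _.
by rewrite /Xr -(Xq_dep o (ltn_ord p)) natrD addrK.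
Qed.

Lemma Phi_ge0 m : 0 <= Phi m.
Proof. by apply: sumr_ge0 => p _; rewrite sqr_ge0. Qed.

Lemma Xr_ge0 m i : 0 <= Xr m i.
Proof. by rewrite /Xr ler0n. Qed.

Lemma Xr_le_sqrtPhi m i : (i < K)%N -> Xr m i <= Num.sqrt (Phi m).
Proof.
move=> iK; rewrite -(@ger0_norm _ (Xr m i)) ?Xr_ge0 // -sqrtr_sqr.
rewrite ler_sqrt ?Phi_ge0 //.
rewrite /Phi (bigD1 (Ordinal iK)) //= lerDl; apply: sumr_ge0 => p _; exact: sqr_ge0.
Qed.

End Moves.


Section Rates.
Variables (R : realType) (K : nat) (a : nat -> R) (n : nat).
Hypothesis K2 : (2 <= K)%N.
Hypothesis hn : forall l, (l < K)%N -> (Num.max (a l) 0) ^+ 2 < n%:R.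

Definition sq : R := Num.sqrt (n%:R).
Definition wt j : R := 1 - a j / sq.
Definition c0 : R := 2 * K%:R + \sum_(j < K) `|a j|.
Local Notation L := (Lam K a n).
Local Notation P := (step K a n).

Lemma n_gt0 : (0 < n)%N.
Proof.
have := hn 0 (ltn_trans (ltnSn 0) K2) => h.
have : (0 : R) < n%:R by apply: le_lt_trans h; exact: sqr_ge0.
by rewrite ltr0n.
Qed.

Lemma n_ge1 : (1 : R) <= n%:R.
Proof. by rewrite ler1n n_gt0. Qed.

Lemma sq_ge1 : 1 <= sq.
Proof. rewrite /sq -[X in X <= _]sqrtr1 ler_sqrt ?ler0n //; exact: n_ge1. Qed.

Lemma sq_gt0 : 0 < sq.
Proof. by apply: lt_le_trans sq_ge1. Qed.

Lemma sq_sq : sq ^+ 2 = n%:R.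
Proof. by rewrite /sq sqr_sqrtr // ler0n. Qed.

Lemma a_lt_sq j : (j < K)%N -> a j < sq.
Proof.
move=> jK; apply: (@le_lt_trans _ _ (Num.max (a j) 0)); first by rewrite le_max lexx.
have h := hn j jK.
rewrite -(@ger0_norm _ (Num.max (a j) 0)) ?le_max ?lexx ?orbT // -sqrtr_sqr /sq.
by rewrite ltr_sqrt // ltr0n n_gt0.
Qed.

Lemma wt_gt0 j : (j < K)%N -> 0 < wt j.
Proof.
move=> jK; rewrite /wt subr_gt0 ltr_pdivrMr ?sq_gt0 // mul1r; exact: a_lt_sq.
Qed.

Lemma wt_le j : wt j <= 1 + `|a j|.
Proof.
rewrite /wt lerD2l.
have e : a j = (a j / sq) * sq by rewrite divfK // gt_eqF // sq_gt0.
move: e; set y := a j / sq => e.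
have hs := sq_ge1; have h0 := normr_ge0 (a j).
have h2 : - a j <= `|a j| by rewrite -normrN ler_norm.
case: (leP 0 y) => hy; first lra.
have h3 : - y <= - a j by rewrite [in X in _ <= X]e; nra.
lra.
Qed.

Lemma c0_ge0 : 0 <= c0.
Proof. rewrite /c0 addr_ge0 // ?mulr_ge0 ?ler0n //; apply: sumr_ge0 => j _; exact: normr_ge0. Qed.

Lemma Lam_eq : L = n%:R * c0 + 1.
Proof. by []. Qed.

Lemma Lam_ge1 : 1 <= L.
Proof. by rewrite Lam_eq lerDr mulr_ge0 ?ler0n ?c0_ge0. Qed.

Lemma Lam_gt0 : 0 < L.
Proof. by apply: lt_le_trans Lam_ge1. Qed.

Lemma Lam_le : L <= n%:R * (c0 + 1).
Proof. rewrite Lam_eq; have h := n_ge1; have hc := c0_ge0; nra. Qed.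

Lemma regroup (ok : nat -> bool) (c : nat -> R) (v : nat -> R) (F : nat -> R) m :
  (forall j, (j < K)%N -> \sum_(i < K) ((ok i && (Xq m i == Xq m j)))%:R = c j) ->
  \sum_(i < K) (\sum_(j < K | Xq m j == Xq m i) v j) * (ok i)%:R * F (Xq m i)
  = \sum_(j < K) v j * c j * F (Xq m j).
Proof.
move=> hc.
under eq_bigr => i _ do rewrite big_mkcond /= !mulr_suml.
rewrite exchange_big /=; apply: eq_bigr => j _.
rewrite -(hc j (ltn_ord j)) mulr_sumr mulr_suml; apply: eq_bigr => i _.
case: (eqVneq (Xq m j) (Xq m i)) => [e|ne] /=.
  rewrite ?andbT e; ring.
rewrite ?andbF /=; ring.
Qed.

Lemma arr_sum m (F : nat -> R) :
  \sum_(i < K) arr_rate K a n m i * F (Xq m i) = n%:R * \sum_(j < K) wt j * F (Xq m j).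
Proof.
transitivity (n%:R * \sum_(i < K) (\sum_(j < K | Xq m j == Xq m i) wt j)
                 * (arr_ok K m i)%:R * F (Xq m i)).
  by rewrite mulr_sumr; apply: eq_bigr => i _; rewrite /arr_rate /alpha !mulrA.
rewrite (@regroup _ (fun _ => 1)); last by move=> j jK; rewrite count_arr.
by congr (_ * _); apply: eq_bigr => j _; rewrite mulr1.
Qed.

Lemma dep_sum m (F : nat -> R) :
  \sum_(i < K) dep_rate R K n m i * F (Xq m i)
  = n%:R * \sum_(j < K) (0 < Xq m j)%N%:R * F (Xq m j).
Proof.
transitivity (n%:R * \sum_(i < K) (\sum_(j < K | Xq m j == Xq m i) (fun _ => 1) j)
                 * (dep_ok m i)%:R * F (Xq m i)).
  by rewrite mulr_sumr; apply: eq_bigr => i _; rewrite /dep_rate /delta !mulrA.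
rewrite (@regroup (dep_ok m) (fun j => (0 < Xq m j)%N%:R) (fun _ => 1) F m); last first.
  by move=> j jK; rewrite count_dep.
by congr (_ * _); apply: eq_bigr => j _; rewrite mul1r.
Qed.

Lemma arr_rate_ge0 m i : 0 <= arr_rate K a n m i.
Proof.
rewrite /arr_rate /alpha !mulr_ge0 ?ler0n //.
apply: sumr_ge0 => j _; apply: ltW; exact: wt_gt0.
Qed.

Lemma dep_rate_ge0 m i : 0 <= dep_rate R K n m i.
Proof.
rewrite /dep_rate /delta !mulr_ge0 ?ler0n //; apply: sumr_ge0 => j _; exact: ler01.
Qed.

Lemma rates_sum m : \sum_(i < K) (arr_rate K a n m i + dep_rate R K n m i) <= n%:R * c0.
Proof.
rewrite big_split /=.
have -> : \sum_(i < K) arr_rate K a n m i = n%:R * \sum_(j < K) wt j.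
  transitivity (\sum_(i < K) arr_rate K a n m i * (fun _ => (1:R)) (Xq m i)).
    by apply: eq_bigr => i _; rewrite mulr1.
  by rewrite (arr_sum m (fun _ => 1)); congr (_ * _); apply: eq_bigr => j _; rewrite mulr1.
have -> : \sum_(i < K) dep_rate R K n m i = n%:R * \sum_(j < K) (0 < Xq m j)%N%:R.
  transitivity (\sum_(i < K) dep_rate R K n m i * (fun _ => (1:R)) (Xq m i)).
    by apply: eq_bigr => i _; rewrite mulr1.
  by rewrite (dep_sum m (fun _ => 1)); congr (_ * _); apply: eq_bigr => j _; rewrite mulr1.
rewrite -mulrDr ler_wpM2l ?ler0n // /c0.
have -> : 2 * K%:R + \sum_(j < K) `|a j| = \sum_(j < K) (1 + `|a j|) + \sum_(j < K) (1 : R).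
  rewrite big_split /= sumr_const card_ord.
  rewrite -[_ *+ K]/(K%:R); ring.
apply: lerD; apply: ler_sum => j _; rewrite ?mulr1.
  exact: wt_le.
by case: (0 < Xq m j)%N.
Qed.

Definition pa m i := arr_rate K a n m i / L.
Definition pd m i := dep_rate R K n m i / L.

Lemma pa_ge0 m i : 0 <= pa m i.
Proof. by rewrite /pa divr_ge0 ?arr_rate_ge0 // ltW // Lam_gt0. Qed.
Lemma pd_ge0 m i : 0 <= pd m i.
Proof. by rewrite /pd divr_ge0 ?dep_rate_ge0 // ltW // Lam_gt0. Qed.

Lemma psum_le1 m : \sum_(i < K) (pa m i + pd m i) <= 1.
Proof.
rewrite /pa /pd; under eq_bigr do rewrite -mulrDl; rewrite -mulr_suml.
rewrite ler_pdivrMr ?Lam_gt0 // mul1r (le_trans (rates_sum m)) //.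
by rewrite Lam_eq lerDl.
Qed.

Lemma q_eq m : \sum_(i < K) (arr_rate K a n m i + dep_rate R K n m i) / L
   = \sum_(i < K) (pa m i + pd m i).
Proof. by apply: eq_bigr => i _; rewrite /pa /pd mulrDl. Qed.

Lemma step_eq f m : P f m = f m + \sum_(i < K)
   (pa m i * (f (arr_move K m i) - f m) + pd m i * (f (dep_move K m i) - f m)).
Proof.
rewrite /step q_eq -/(pa _ _) -/(pd _ _).
have -> : \sum_(i < K) (pa m i * (f (arr_move K m i) - f m) + pd m i * (f (dep_move K m i) - f m))
  = \sum_(i < K) (pa m i * f (arr_move K m i) + pd m i * f (dep_move K m i))
    - (\sum_(i < K) (pa m i + pd m i)) * f m.
  by rewrite mulr_suml -sumrB; apply: eq_bigr => i _; ring.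
rewrite /pa /pd; ring.
Qed.

Lemma step_mono f g m : (forall x, f x <= g x) -> P f m <= P g m.
Proof.
move=> fg; rewrite /step q_eq; apply: lerD.
  apply: ler_sum => i _; apply: lerD; apply: ler_wpM2l => //.
  - by rewrite divr_ge0 ?arr_rate_ge0 // ltW // Lam_gt0.
  - by rewrite divr_ge0 ?dep_rate_ge0 // ltW // Lam_gt0.
by apply: ler_wpM2l => //; rewrite subr_ge0 psum_le1.
Qed.

Lemma step_affine c d f m : P (fun x => c * f x + d) m = c * P f m + d.
Proof.
rewrite !step_eq.
set S := \sum_(i < K) _.
have -> : S = c * \sum_(i < K) (pa m i * (f (arr_move K m i) - f m)
                                + pd m i * (f (dep_move K m i) - f m)).
  by rewrite /S mulr_sumr; apply: eq_bigr => i _; ring.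
ring.
Qed.

Lemma iter_mono k f g : (forall x, f x <= g x) -> forall x, iter k P f x <= iter k P g x.
Proof. move=> fg; elim: k => //= k IH x; exact: step_mono. Qed.

Lemma iter_affine k c d f x : iter k P (fun y => c * f y + d) x = c * iter k P f x + d.
Proof.
elim: k x => //= k IH x.
rewrite (_ : iter k P (fun y => c * f y + d) = fun y => c * iter k P f y + d).
  exact: step_affine.
by apply: funext => y; exact: IH.
Qed.


Lemma sum_wb m : \sum_(j < K) wt j + \sum_(j < K) (0 < Xq m j)%N%:R <= c0.
Proof.
rewrite /c0.
have -> : 2 * K%:R + \sum_(j < K) `|a j| = \sum_(j < K) (1 + `|a j|) + \sum_(j < K) (1 : R).
  rewrite big_split /= sumr_const card_ord.
  rewrite -[_ *+ K]/(K%:R); ring.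
apply: lerD; apply: ler_sum => j _.
  exact: wt_le.
by case: (0 < Xq m j)%N.
Qed.

Local Notation Ph := (Phi K R).
Definition Lf m := Num.sqrt (Ph m).

Lemma pos_mul_X (x : nat) : ((0 < x)%N%:R : R) * (x%:R) = x%:R.
Proof. by case: x => [|x]; rewrite ?mul0r ?mul1r. Qed.

Lemma pa0 m i : arr_ok K m i = false -> pa m i = 0.
Proof. by move=> o; rewrite /pa /arr_rate o /= ?mulr0n ?mulr0 ?mul0r. Qed.
Lemma pd0 m i : dep_ok m i = false -> pd m i = 0.
Proof. by move=> o; rewrite /pd /dep_rate o /= ?mulr0n ?mulr0 ?mul0r. Qed.

Lemma drift_Phi m : P Ph m <= Ph m - 2 * sq / L * (\sum_(j < K) a j * Xr R m j) + 1.
Proof.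
rewrite step_eq.
have e : \sum_(i < K) (pa m i * (Ph (arr_move K m i) - Ph m) + pd m i * (Ph (dep_move K m i) - Ph m))
   = \sum_(i < K) (pa m i * (2 * Xr R m i + 1) + pd m i * (1 - 2 * Xr R m i)).
  apply: eq_bigr => i _; congr (_ + _).
    case o: (arr_ok K m i); last by rewrite pa0 // !mul0r.
    by rewrite Phi_arr //; congr (_ * _); ring.
  case o: (dep_ok m i); last by rewrite pd0 // !mul0r.
  by rewrite Phi_dep //; congr (_ * _); ring.
rewrite e.
have e2 : \sum_(i < K) (pa m i * (2 * Xr R m i + 1) + pd m i * (1 - 2 * Xr R m i))
   = (\sum_(i < K) arr_rate K a n m i * (fun x : nat => 2 * (x%:R : R) + 1) (Xq m i)
     + \sum_(i < K) dep_rate R K n m i * (fun x : nat => 1 - 2 * (x%:R : R)) (Xq m i)) / L.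
  rewrite -big_split mulr_suml; apply: eq_bigr => i _; rewrite /pa /pd /Xr /=; ring.
rewrite e2 (arr_sum m (fun x : nat => 2 * (x%:R : R) + 1)) (dep_sum m (fun x : nat => 1 - 2 * (x%:R : R))) /=.
set S := \sum_(j < K) a j * Xr R m j.
set W := \sum_(j < K) wt j + \sum_(j < K) (0 < Xq m j)%N%:R.
have e3 : \sum_(j < K) wt j * (2 * (Xq m j)%:R + 1)
          + \sum_(j < K) (0 < Xq m j)%N%:R * (1 - 2 * (Xq m j)%:R)
        = - (2 / sq) * S + W.
  rewrite /W /S mulr_sumr -!big_split /=; apply: eq_bigr => j _.
  have hb := pos_mul_X (Xq m j).
  rewrite mulrBr mulr1 mulrCA hb /wt /Xr; ring.
rewrite -mulrDr e3.
have hW : W <= c0 by exact: sum_wb.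
have hsq := sq_gt0; have hL := Lam_gt0.
have e4 : n%:R * (- (2 / sq) * S + W) / L = - (2 * sq / L * S) + n%:R * W / L.
  rewrite -sq_sq; field; rewrite ?gt_eqF //.
rewrite e4.
have h5 : n%:R * W / L <= 1.
  rewrite ler_pdivrMr // mul1r (le_trans (y := n%:R * c0)) //.
    by rewrite ler_wpM2l ?ler0n.
  by rewrite Lam_eq lerDl.
lra.
Qed.

Lemma abel (N : nat) m :
  \sum_(j < N) a j * Xr R m j = \sum_(i < N) (m i)%:R * \sum_(i <= j < N) a j.
Proof.
elim: N => [|N IH]; first by rewrite !big_ord0.
rewrite big_ord_recr IH [in RHS]big_ord_recr.
rewrite [in RHS](eq_bigr (fun i : 'I_N => (m i)%:R * \sum_(i <= j < N) a j + (m i)%:R * a N)); last first.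
  by move=> i _; rewrite big_nat_recr ?mulrDr //=; exact: ltnW.
rewrite big_split /= big_nat1 -mulr_suml.
rewrite /Xr /Xq natr_sum big_ord_recr /=; ring.
Qed.

Variable beta : R.
Hypothesis hbeta : 0 < beta.
Hypothesis hB : forall i, (i < K)%N -> beta <= \sum_(i <= j < K) a j.

Lemma sumaX_ge m : beta * Xr R m K.-1 <= \sum_(j < K) a j * Xr R m j.
Proof.
rewrite abel /Xr /Xq prednK ?(ltn_trans (ltnSn 0) K2) // natr_sum mulr_sumr.
apply: ler_sum => i _; rewrite mulrC ler_wpM2l ?ler0n //; exact: hB.
Qed.

Lemma Xr_ge0' m i : 0 <= Xr R m i.
Proof. by rewrite /Xr ler0n. Qed.

Lemma Lf_le m : Lf m <= K%:R * Xr R m K.-1.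
Proof.
have hX := Xr_ge0' m K.-1.
have hK : (1 : R) <= K%:R by rewrite ler1n (ltn_trans (ltnSn 0) K2).
rewrite -(@ger0_norm _ (K%:R * Xr R m K.-1)) ?mulr_ge0 ?ler0n // -sqrtr_sqr /Lf.
rewrite ler_sqrt ?sqr_ge0 //.
apply: (@le_trans _ _ (K%:R * Xr R m K.-1 ^+ 2)); last by nra.
apply: (@le_trans _ _ (\sum_(p < K) Xr R m K.-1 ^+ 2)); last first.
  by rewrite sumr_const card_ord mulr_natl.
rewrite /Phi; apply: ler_sum => p _.
have hp : Xr R m p <= Xr R m K.-1.
  rewrite /Xr ler_nat Xq_mono // -ltnS prednK ?ltn_ord //.
  exact: (ltn_trans (ltnSn 0) K2).
have := Xr_ge0' m p; nra.
Qed.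

Definition kap := 2 * sq * beta / (K%:R * L).

Lemma kap_gt0 : 0 < kap.
Proof.
rewrite /kap divr_gt0 ?mulr_gt0 ?sq_gt0 ?Lam_gt0 //.
by rewrite ltr0n (ltn_trans (ltnSn 0) K2).
Qed.

Lemma drift_Phi2 m : P Ph m <= Ph m - kap * Lf m + 1.
Proof.
have h1 := drift_Phi m.
have h2 := sumaX_ge m.
have h3 := Lf_le m.
have hK : (0 : R) < K%:R by rewrite ltr0n (ltn_trans (ltnSn 0) K2).
have hsq := sq_gt0; have hL := Lam_gt0.
set S := \sum_(j < K) a j * Xr R m j in h1 h2.
have h4 : beta * (Lf m / K%:R) <= S.
  apply: le_trans h2; rewrite ler_pM2l // ler_pdivrMr // mulrC; exact: h3.
have h5 : kap * Lf m = 2 * sq / L * (beta * (Lf m / K%:R)).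
  rewrite /kap; field; rewrite ?gt_eqF //.
have h6 : 2 * sq / L * (beta * (Lf m / K%:R)) <= 2 * sq / L * S.
  rewrite ler_wpM2l // divr_ge0 ?mulr_ge0 ?ltW //.
lra.
Qed.

Lemma drift_Phi_crude m : P Ph m <= Ph m + 1.
Proof.
have h1 := drift_Phi m; have h2 := sumaX_ge m.
have hsq := sq_gt0; have hL := Lam_gt0.
set S := \sum_(j < K) a j * Xr R m j in h1 h2.
have hS : 0 <= S.
  apply: le_trans h2; apply: mulr_ge0; [exact: ltW | exact: Xr_ge0'].
have h3 : 0 <= 2 * sq / L * S.
  apply: mulr_ge0 => //; apply: divr_ge0; last exact: ltW.
  by apply: mulr_ge0 => //; exact: ltW.
lra.
Qed.

Lemma sqrt_concave (x y : R) : 0 <= x -> 0 < y ->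
  Num.sqrt x - Num.sqrt y <= (x - y) / (2 * Num.sqrt y).
Proof.
move=> x0 y0; have hy : 0 < Num.sqrt y by rewrite sqrtr_gt0.
rewrite ler_pdivlMr ?mulr_gt0 //.
rewrite -[in X in _ <= X - _](sqr_sqrtr x0) -[in X in _ <= _ - X](sqr_sqrtr (ltW y0)).
have := sqr_ge0 (Num.sqrt x - Num.sqrt y); nra.
Qed.

Lemma sqrt_le_of (x y : R) : 0 <= y -> x <= y ^+ 2 -> Num.sqrt x <= y.
Proof.
move=> y0 h; rewrite -(@ger0_norm _ y) // -sqrtr_sqr ler_sqrt ?sqr_ge0 //.
Qed.

Lemma le_sqrt_of (x y : R) : 0 <= y -> y ^+ 2 <= x -> y <= Num.sqrt x.
Proof.
move=> y0 h; rewrite -(@ger0_norm _ y) // -sqrtr_sqr ler_sqrt //.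
exact: le_trans (sqr_ge0 y) h.
Qed.

Lemma Lf_ge0 m : 0 <= Lf m.
Proof. exact: sqrtr_ge0. Qed.

Lemma Lf_arr m i : arr_ok K m i -> (i < K)%N ->
  Lf m <= Lf (arr_move K m i) <= Lf m + 1.
Proof.
move=> o iK; have hX : Xr R m i <= Lf m := @Xr_le_sqrtPhi K R m i iK; have hX0 := Xr_ge0' m i.
have hP := Phi_ge0 K R m; have hL := Lf_ge0 m.
have e := @Phi_arr K R m i o iK.
have eL : Lf m ^+ 2 = Ph m by rewrite /Lf sqr_sqrtr.
apply/andP; split.
  by apply: le_sqrt_of => //; rewrite eL e; lra.
apply: sqrt_le_of; first lra.
rewrite e -eL; nra.
Qed.

Lemma Lf_dep m i : dep_ok m i -> (i < K)%N ->
  Lf m - 1 <= Lf (dep_move K m i) <= Lf m.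
Proof.
move=> o iK; have hX := @Xr_le_sqrtPhi K R m i iK.
have hX1 : 1 <= Xr R m i by rewrite /Xr ler1n; exact: (@dep_ok_pos m i o).
have hP := Phi_ge0 K R m; have hL := Lf_ge0 m.
have e := @Phi_dep K R m i o iK.
have eL : Lf m ^+ 2 = Ph m by rewrite /Lf sqr_sqrtr.
rewrite /Lf in hX.
apply/andP; split.
  apply: le_sqrt_of; first by rewrite /Lf; lra.
  rewrite e -eL /Lf; nra.
apply: sqrt_le_of => //; rewrite e -eL /Lf; lra.
Qed.

Lemma drift_L m : 0 < Lf m ->
  \sum_(i < K) (pa m i * (Lf (arr_move K m i) - Lf m) + pd m i * (Lf (dep_move K m i) - Lf m))
  <= - kap / 2 + 1 / (2 * Lf m).
Proof.
move=> Lpos.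
have Ppos : 0 < Ph m by rewrite -sqrtr_gt0.
apply: (@le_trans _ _ ((P Ph m - Ph m) / (2 * Lf m))).
  have -> : P Ph m - Ph m = \sum_(i < K) (pa m i * (Ph (arr_move K m i) - Ph m)
                                + pd m i * (Ph (dep_move K m i) - Ph m)).
    by rewrite step_eq; ring.
  rewrite mulr_suml; apply: ler_sum => i _.
  rewrite mulrDl; apply: lerD; rewrite -mulrA; apply: ler_wpM2l;
   rewrite ?pa_ge0 ?pd_ge0 //; exact: sqrt_concave (Phi_ge0 _ _ _) Ppos.
have h := drift_Phi2 m.
rewrite ler_pdivrMr ?mulr_gt0 //.
have -> : (- kap / 2 + 1 / (2 * Lf m)) * (2 * Lf m) = - kap * Lf m + 1.
  by field; rewrite gt_eqF.
lra.
Qed.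

End Rates.


Section H.
Variables (R : realType) (K : nat) (a : nat -> R) (n : nat).
Hypothesis K2 : (2 <= K)%N.
Hypothesis hn : forall l, (l < K)%N -> (Num.max (a l) 0) ^+ 2 < n%:R.
Variable beta : R.
Hypothesis hbeta : 0 < beta.
Hypothesis hB : forall i, (i < K)%N -> beta <= \sum_(i <= j < K) a j.

Local Notation P := (step K a n).
Local Notation Lf := (Lf R K).
Local Notation kp := (kap R K a n beta).

Let pa_ge0' := @pa_ge0 R K a n K2 hn.
Let pd_ge0' := @pd_ge0 R K a n.
Let psum' := @psum_le1 R K a n K2 hn.
Let iter_mono' := @iter_mono R K a n K2 hn.
Let kap_gt0' : 0 < kp := @kap_gt0 R K a n K2 hn beta hbeta.
Let drift_L' := @drift_L R K a n K2 hn beta hbeta hB.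

Definition gh (r y : R) := (Num.max (y - r) 0) ^+ 2.
Definition Lstar := 2 / kp.

Lemma max0_ge0 (x : R) : 0 <= Num.max x 0.
Proof. by rewrite le_max lexx orbT. Qed.

Lemma conv_ineq (r y y' : R) :
  gh r y' <= gh r y + 2 * Num.max (y - r) 0 * (y' - y) + (y' - y) ^+ 2.
Proof.
rewrite /gh !maxEle.
case: (leP (y' - r) 0) => h1; case: (leP (y - r) 0) => h2.
- have := sqr_ge0 (y' - y); nra.
- have := sqr_ge0 (y' - r); nra.
- nra.
- nra.
Qed.

Lemma gh_shift (r d y : R) : 0 <= d -> gh r y - 2 * d * Num.max (y - r) 0 <= gh (r + d) y.
Proof.
move=> d0; rewrite /gh !maxEle.
case: (leP (y - r) 0) => h1; case: (leP (y - (r + d)) 0) => h2; nra.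
Qed.

Lemma gh_anti (rho r y : R) : rho <= r -> gh r y <= gh rho y.
Proof.
move=> h; rewrite /gh !maxEle.
case: (leP (y - r) 0) => h1; case: (leP (y - rho) 0) => h2; nra.
Qed.

Lemma gh_ge0 (r y : R) : 0 <= gh r y.
Proof. exact: sqr_ge0. Qed.

Lemma gh_le (r y b : R) : 0 <= b -> y - r <= b -> gh r y <= b ^+ 2.
Proof.
move=> b0 h; rewrite /gh maxEle; case: (leP (y - r) 0) => h1; nra.
Qed.

Lemma gh_sq (r y : R) : 0 <= r -> 0 <= y -> y ^+ 2 <= 2 * r ^+ 2 + 2 * gh r y.
Proof.
move=> r0 y0; rewrite /gh maxEle; case: (leP (y - r) 0) => h1.
  have := sqr_ge0 r; nra.
have := sqr_ge0 (y - 2 * r); nra.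
Qed.

Lemma Lstar_gt0 : 0 < Lstar.
Proof. by rewrite /Lstar divr_gt0. Qed.

Lemma h_step m (r rho : R) : Lstar <= r -> rho <= r + kp / 4 ->
  P (fun x => gh r (Lf x)) m <= gh rho (Lf m) + 5.
Proof.
move=> hr hrho.
have hk := kap_gt0'.
have hLs := Lstar_gt0.
rewrite step_eq.
have hpsum := psum' m.
have hgr : gh r (Lf m) - 2 * (kp / 4) * Num.max (Lf m - r) 0 <= gh rho (Lf m).
  have hd : 0 <= kp / 4 by apply: divr_ge0; [exact: ltW|].
  exact: le_trans (gh_shift r (kp / 4) (Lf m) hd) (gh_anti rho (r + kp / 4) (Lf m) hrho).
pose c : R := Num.max (Lf m - r) 0.
rewrite -/c in hgr.
have hc : 0 <= c := max0_ge0 _.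
have hghr : gh r (Lf m) = c ^+ 2 by [].
case: (leP (Lstar + 1) (Lf m)) => hL.
  have Lpos : 0 < Lf m by lra.
  have hdr := drift_L' m Lpos.
  have h1 : 1 / (2 * Lf m) <= kp / 4.
    rewrite ler_pdivrMr ?mulr_gt0 //.
    have e : kp * Lstar = 2 by rewrite /Lstar; field; rewrite gt_eqF.
    have h2 : kp * Lstar <= kp * Lf m by rewrite ler_pM2l //; lra.
    nra.
  set D := \sum_(i < K) _ in hdr.
  have hD : D <= - kp / 4 by lra.
  have hsum : \sum_(i < K) (pa R K a n m i * (gh r (Lf (arr_move K m i)) - gh r (Lf m))
                           + pd R K a n m i * (gh r (Lf (dep_move K m i)) - gh r (Lf m)))
     <= \sum_(i < K) (2 * c * (pa R K a n m i * (Lf (arr_move K m i) - Lf m)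
                                  + pd R K a n m i * (Lf (dep_move K m i) - Lf m))
                       + (pa R K a n m i + pd R K a n m i)).
    apply: ler_sum => i _.
    have termA : pa R K a n m i * (gh r (Lf (arr_move K m i)) - gh r (Lf m))
        <= 2 * c * (pa R K a n m i * (Lf (arr_move K m i) - Lf m)) + pa R K a n m i.
      case o: (arr_ok K m i); last by rewrite pa0 // !mul0r !mulr0 addr0.
      have /andP[h3 h4] := @Lf_arr R K m i o (ltn_ord i).
      have hv := conv_ineq r (Lf m) (Lf (arr_move K m i)); rewrite -/c in hv.
      have hp := pa_ge0' m i.
      have hw : gh r (Lf (arr_move K m i)) - gh r (Lf m)
                <= 2 * c * (Lf (arr_move K m i) - Lf m) + 1 by nra.
      have -> : 2 * c * (pa R K a n m i * (Lf (arr_move K m i) - Lf m)) + pa R K a n m i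
        = pa R K a n m i * (2 * c * (Lf (arr_move K m i) - Lf m) + 1) by ring.
      exact: ler_wpM2l.
    have termB : pd R K a n m i * (gh r (Lf (dep_move K m i)) - gh r (Lf m))
        <= 2 * c * (pd R K a n m i * (Lf (dep_move K m i) - Lf m)) + pd R K a n m i.
      case o: (dep_ok m i); last by rewrite pd0 // !mul0r !mulr0 addr0.
      have /andP[h3 h4] := @Lf_dep R K m i o (ltn_ord i).
      have hv := conv_ineq r (Lf m) (Lf (dep_move K m i)); rewrite -/c in hv.
      have hp := pd_ge0' m i.
      have hw : gh r (Lf (dep_move K m i)) - gh r (Lf m)
                <= 2 * c * (Lf (dep_move K m i) - Lf m) + 1 by nra.
      have -> : 2 * c * (pd R K a n m i * (Lf (dep_move K m i) - Lf m)) + pd R K a n m i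
        = pd R K a n m i * (2 * c * (Lf (dep_move K m i) - Lf m) + 1) by ring.
      exact: ler_wpM2l.
    set XA := pa R K a n m i * (Lf (arr_move K m i) - Lf m) in termA *.
    set XB := pd R K a n m i * (Lf (dep_move K m i) - Lf m) in termB *.
    have e : 2 * c * (XA + XB) = 2 * c * XA + 2 * c * XB by ring.
    rewrite e; lra.
  have e2 : \sum_(i < K) (2 * c * (pa R K a n m i * (Lf (arr_move K m i) - Lf m)
                                  + pd R K a n m i * (Lf (dep_move K m i) - Lf m))
                       + (pa R K a n m i + pd R K a n m i))
            = 2 * c * D + \sum_(i < K) (pa R K a n m i + pd R K a n m i).
    by rewrite big_split /= -mulr_sumr.
  have h5 : 2 * c * D <= 2 * c * (- kp / 4).
    by apply: ler_wpM2l => //; lra.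
  have h6 : 2 * c * (- kp / 4) = - (2 * (kp / 4) * c) by ring.
  lra.
have hsum : \sum_(i < K) (pa R K a n m i * (gh r (Lf (arr_move K m i)) - gh r (Lf m))
                         + pd R K a n m i * (gh r (Lf (dep_move K m i)) - gh r (Lf m)))
     <= 4 * \sum_(i < K) (pa R K a n m i + pd R K a n m i).
  rewrite mulr_sumr; apply: ler_sum => i _.
  have hg0 := gh_ge0 r (Lf m).
  have termA : pa R K a n m i * (gh r (Lf (arr_move K m i)) - gh r (Lf m)) <= pa R K a n m i * 4.
    case o: (arr_ok K m i); last by rewrite pa0 // !mul0r.
    have /andP[h3 h4] := @Lf_arr R K m i o (ltn_ord i).
    apply: ler_wpM2l; first exact: pa_ge0'.
    have : gh r (Lf (arr_move K m i)) <= 2 ^+ 2 by apply: gh_le => //; lra.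
    lra.
  have termB : pd R K a n m i * (gh r (Lf (dep_move K m i)) - gh r (Lf m)) <= pd R K a n m i * 4.
    case o: (dep_ok m i); last by rewrite pd0 // !mul0r.
    have /andP[h3 h4] := @Lf_dep R K m i o (ltn_ord i).
    apply: ler_wpM2l; first exact: pd_ge0'.
    have : gh r (Lf (dep_move K m i)) <= 2 ^+ 2 by apply: gh_le => //; lra.
    lra.
  lra.
have h7 : gh r (Lf m) <= 1 ^+ 2 by apply: gh_le => //; lra.
have := gh_ge0 rho (Lf m).
lra.
Qed.

Definition rho (L0 : R) (k : nat) := Num.max (L0 - kp / 4 * k%:R) Lstar.

Lemma rho_ge (L0 : R) k : Lstar <= rho L0 k.
Proof. by rewrite /rho le_max lexx orbT. Qed.

Lemma rho_step (L0 : R) k : rho L0 k <= rho L0 k.+1 + kp / 4.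
Proof.
have e : (k.+1%:R : R) = k%:R + 1 by rewrite -addn1 natrD.
have hk := kap_gt0'.
rewrite /rho e !maxEle.
case: (leP (L0 - kp / 4 * k%:R) Lstar) => h1;
  case: (leP (L0 - kp / 4 * (k%:R + 1)) Lstar) => h2; nra.
Qed.

Lemma iter_h (L0 : R) k x :
  iter k P (fun y => gh (rho L0 k) (Lf y)) x <= gh (rho L0 0) (Lf x) + 5 * k%:R.
Proof.
elim: k x => [|k IH] x; first by rewrite /= mulr0 addr0.
rewrite iterSr.
apply: (le_trans (iter_mono' k _ (fun y => 1 * gh (rho L0 k) (Lf y) + 5) _ x)).
  move=> y; rewrite mul1r; apply: h_step; [exact: rho_ge | exact: rho_step].
rewrite iter_affine mul1r.
have e : (k.+1%:R : R) = k%:R + 1 by rewrite -addn1 natrD.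
have := IH x; rewrite e; lra.
Qed.

Lemma iter_crude k x : iter k P (Phi K R) x <= Phi K R x + k%:R.
Proof.
elim: k x => [|k IH] x; first by rewrite /= addr0.
rewrite iterSr.
apply: (le_trans (iter_mono' k _ (fun y => 1 * Phi K R y + 1) _ x)).
  move=> y; rewrite mul1r; exact: (@drift_Phi_crude R K a n K2 hn beta hbeta hB).
rewrite iter_affine mul1r.
have e : (k.+1%:R : R) = k%:R + 1 by rewrite -addn1 natrD.
have := IH x; rewrite e; lra.
Qed.

Lemma zsq_le x : zsq R K n x <= Phi K R x / n%:R.
Proof.
rewrite /zsq ler_wpM2r ?invr_ge0 ?ler0n //.
rewrite /Phi; apply: ler_sum => j _.
rewrite /Xr; apply: lerXn2r; rewrite ?nnegrE ?ler0n // ler_nat.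
by case: (nat_of_ord j) => [|j']; rewrite ?Xq0 ?XqS ?leq_addl.
Qed.

Lemma iter_main (L0 : R) k x : Lf x <= L0 ->
  iter k P (zsq R K n) x <= (2 * rho L0 k ^+ 2 + 10 * k%:R) / n%:R.
Proof.
move=> hx.
have hn0 : (0 : R) < n%:R by rewrite ltr0n (@n_gt0 R K a n K2 hn).
have hr0 : 0 <= rho L0 k by apply: le_trans (rho_ge L0 k); exact: ltW Lstar_gt0.
apply: (le_trans (iter_mono' k _ (fun y => (2 / n%:R) * gh (rho L0 k) (Lf y)
                                           + 2 * rho L0 k ^+ 2 / n%:R) _ x)).
  move=> y; apply: (le_trans (zsq_le y)).
  have hP : Phi K R y = Lf y ^+ 2 by rewrite -(sqr_sqrtr (Phi_ge0 K R y)).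
  have h := @gh_sq (rho L0 k) (Lf y) hr0 (Lf_ge0 R K y).
  rewrite hP; rewrite ler_pdivrMr //.
  have -> : (2 / n%:R * gh (rho L0 k) (Lf y) + 2 * rho L0 k ^+ 2 / n%:R) * n%:R
            = 2 * gh (rho L0 k) (Lf y) + 2 * rho L0 k ^+ 2 by field; rewrite gt_eqF.
  lra.
rewrite iter_affine.
have h0 : gh (rho L0 0) (Lf x) <= 0 ^+ 2.
  apply: gh_le => //; rewrite /rho mulr0 subr0; apply: (le_trans (y := Lf x - L0)).
    by apply: lerB => //; rewrite le_max lexx.
  lra.
have h1 := iter_h L0 k x.
have h2 : (0 : R) <= 2 / n%:R by rewrite divr_ge0 ?ler0n.
have h3 : 2 / n%:R * iter k P (fun y => gh (rho L0 k) (Lf y)) x <= 2 / n%:R * (5 * k%:R).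
  apply: ler_wpM2l => //; rewrite expr0n /= in h0; lra.
have -> : (2 * rho L0 k ^+ 2 + 10 * k%:R) / n%:R
          = 2 / n%:R * (5 * k%:R) + 2 * rho L0 k ^+ 2 / n%:R by field; rewrite gt_eqF.
lra.
Qed.

Lemma iter_crude_zsq k x : iter k P (zsq R K n) x <= (Phi K R x + k%:R) / n%:R.
Proof.
have hn0 : (0 : R) < n%:R by rewrite ltr0n (@n_gt0 R K a n K2 hn).
apply: (le_trans (iter_mono' k _ (fun y => (1 / n%:R) * Phi K R y + 0) _ x)).
  by move=> y; rewrite addr0 -mulrA mul1r mulrC; exact: zsq_le.
rewrite iter_affine addr0.
have := iter_crude k x => h.
rewrite ler_pdivlMr //.
have -> : 1 / n%:R * iter k P (Phi K R) x * n%:R = iter k P (Phi K R) x by field; rewrite gt_eqF.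
exact: h.
Qed.

End H.


Section Poisson.
Variable R : realType.

Lemma eser_le (u : nat -> R) (B : R) : (forall k, 0 <= u k) ->
  (forall N, \sum_(0 <= k < N) u k <= B) ->
  (\sum_(0 <= k <oo) (u k)%:E <= B%:E)%E.
Proof.
move=> u0 HB.
apply: lime_le.
  by apply: is_cvg_ereal_nneg_natsum => n _; rewrite lee_fin.
apply: nearW => N /=.
rewrite sumEFin. rewrite lee_fin. done.
Qed.

Lemma expsum_le (x : R) N : 0 <= x -> \sum_(0 <= k < N) x ^+ k / (k`!)%:R <= expR x.
Proof.
move=> x0.
have := @nondecreasing_cvgn_le R (series (exp_coeff x)) _ (is_cvg_series_exp_coeff x) N.
rewrite /series /=. apply.
apply/nondecreasing_seqP => n; rewrite /series /= big_nat_recr //= lerDl.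
exact: exp_coeff_ge0.
Qed.

Variable lam : R.
Hypothesis lam0 : 0 <= lam.

Definition tt (k : nat) : R := lam ^+ k / (k`!)%:R.
Definition EE N := \sum_(0 <= k < N) tt k.

Lemma tt_ge0 k : 0 <= tt k.
Proof. by rewrite /tt divr_ge0 ?exprn_ge0 ?ler0n. Qed.

Lemma fact_gt0R k : (0 : R) < (k`!)%:R.
Proof. by rewrite ltr0n fact_gt0. Qed.

Lemma ttS k : (k.+1)%:R * tt k.+1 = lam * tt k.
Proof.
rewrite /tt factS natrM exprS.
have h1 := fact_gt0R k.
have h2 : (0 : R) < (k.+1)%:R by rewrite ltr0n.
field; rewrite !gt_eqF //.
Qed.

Lemma EE_le N : EE N <= expR lam.
Proof. exact: expsum_le. Qed.

Lemma S1_eq N : \sum_(0 <= k < N) k%:R * tt k = lam * EE N - N%:R * tt N.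
Proof.
elim: N => [|N IH]; first by rewrite /EE !big_geq // mul0r mulr0 subr0.
rewrite /EE !big_nat_recr //= IH /EE ttS; ring.
Qed.

Lemma S2_eq N : \sum_(0 <= k < N) (k%:R - lam) ^+ 2 * tt k
              = lam * EE N + N%:R * tt N * (lam - N%:R).
Proof.
elim: N => [|N IH]; first by rewrite /EE !big_geq //; ring.
rewrite /EE !big_nat_recr //= IH /EE.
have e := ttS N.
have e2 : (N.+1%:R : R) = N%:R + 1 by rewrite -addn1 natrD.
rewrite e e2; ring.
Qed.

Lemma S1_le N : \sum_(0 <= k < N) k%:R * tt k <= lam * expR lam.
Proof.
rewrite S1_eq.
have g1 : lam * EE N <= lam * expR lam by apply: ler_wpM2l => //; exact: EE_le.
have g2 : 0 <= N%:R * tt N by rewrite mulr_ge0 ?ler0n ?tt_ge0.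
lra.
Qed.

Lemma S2_le N : \sum_(0 <= k < N) (k%:R - lam) ^+ 2 * tt k <= lam * expR lam.
Proof.
pose M := maxn N (Num.truncn lam).+1.
have hNM : (N <= M)%N by rewrite leq_maxl.
have hM : lam < M%:R.
  apply: (lt_le_trans (truncnS_gt lam)); rewrite ler_nat; exact: leq_maxr.
apply: (@le_trans _ _ (\sum_(0 <= k < M) (k%:R - lam) ^+ 2 * tt k)).
  rewrite (big_cat_nat (leq0n N) hNM) /= lerDl.
  by apply: sumr_ge0 => k _; rewrite mulr_ge0 ?sqr_ge0 ?tt_ge0.
rewrite S2_eq.
have g1 : lam * EE M <= lam * expR lam by apply: ler_wpM2l => //; exact: EE_le.
have g2 : M%:R * tt M * (lam - M%:R) <= 0.
  apply: mulr_ge0_le0; first by apply: mulr_ge0; [exact: ler0n | exact: tt_ge0].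
  rewrite subr_le0; exact: ltW.
lra.
Qed.

Lemma poisson_bound (A B C : R) (u : nat -> R) :
  0 <= A -> 0 <= B -> 0 <= C ->
  (forall k, u k <= A + B * k%:R + C * (k%:R - lam) ^+ 2) ->
  forall N, \sum_(0 <= k < N) (expR (- lam) * lam ^+ k / (k`!)%:R * u k)
            <= A + B * lam + C * lam.
Proof.
move=> A0 B0 C0 hu N.
have he := expR_gt0 (- lam).
apply: (@le_trans _ _ (\sum_(0 <= k < N) (expR (- lam) *
          (A * tt k + B * (k%:R * tt k) + C * ((k%:R - lam) ^+ 2 * tt k))))).
  apply: ler_sum => k _.
  have -> : expR (- lam) * lam ^+ k / (k`!)%:R = expR (- lam) * tt k by rewrite /tt mulrA.
  rewrite -mulrA; apply: ler_wpM2l; first exact: ltW.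
  have -> : A * tt k + B * (k%:R * tt k) + C * ((k%:R - lam) ^+ 2 * tt k)
          = tt k * (A + B * k%:R + C * (k%:R - lam) ^+ 2) by ring.
  by apply: ler_wpM2l; [exact: tt_ge0 | exact: hu].
rewrite -mulr_sumr !big_split /= -!mulr_sumr.
have h1 := EE_le N; have h2 := S1_le N; have h3 := S2_le N.
have h4 : expR (- lam) * expR lam = 1 by rewrite -expRD addNr expR0.
have hE : 0 <= EE N by apply: sumr_ge0 => k _; exact: tt_ge0.
rewrite -/(EE N).
set s1 := \sum_(0 <= k < N) k%:R * tt k in h2 *.
set s2 := \sum_(0 <= k < N) (k%:R - lam) ^+ 2 * tt k in h3 *.
have g1 : A * EE N <= A * expR lam by apply: ler_wpM2l.
have g2 : B * s1 <= B * (lam * expR lam) by apply: ler_wpM2l.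
have g3 : C * s2 <= C * (lam * expR lam) by apply: ler_wpM2l.
have g : A * EE N + B * s1 + C * s2 <= (A + B * lam + C * lam) * expR lam by nra.
have g' := ler_wpM2l (ltW he) g.
apply: (le_trans g').
have -> : expR (- lam) * ((A + B * lam + C * lam) * expR lam)
        = (A + B * lam + C * lam) * (expR (- lam) * expR lam) by ring.
by rewrite h4 mulr1.
Qed.

End Poisson.

Lemma cauchy_sum (R : realType) (N : nat) (x : nat -> R) :
  (\sum_(j < N) x j) ^+ 2 <= N%:R * \sum_(j < N) x j ^+ 2.
Proof.
elim: N => [|N IH]; first by rewrite !big_ord0 expr0n /= mul0r.
rewrite !big_ord_recr /=.
set S := \sum_(j < N) x j in IH *; set Q := \sum_(j < N) x j ^+ 2 in IH *.
have e2 : (N.+1%:R : R) = N%:R + 1 by rewrite -addn1 natrD.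
rewrite e2.
have hQ : 0 <= Q by apply: sumr_ge0 => j _; exact: sqr_ge0.
case: (posnP N) => [N0|Npos].
  have S0 : S = 0 by rewrite /S N0 big_ord0.
  rewrite S0 N0 /=; nra.
have hN : (0 : R) < N%:R by rewrite ltr0n.
have key : 2 * S * x N <= Q + N%:R * x N ^+ 2.
  rewrite -(ler_pM2l hN).
  have := sqr_ge0 (S - N%:R * x N); nra.
nra.
Qed.

Lemma beta_exists (R : realType) (K : nat) (a : nat -> R) :
  (forall i : nat, (i < K)%N -> 0 < \sum_(i <= j < K) a j) ->
  exists beta : R, 0 < beta /\ forall i, (i < K)%N -> beta <= \sum_(i <= j < K) a j.
Proof.
move=> hpos.
suff H : forall N, exists beta : R, 0 < beta /\
    forall i, (i < N)%N -> (i < K)%N -> beta <= \sum_(i <= j < K) a j.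
  by have [b [b0 hb]] := H K; exists b; split => // i iK; exact: hb.
elim=> [|N [b [b0 hb]]]; first by exists 1; split.
case: (ltnP N K) => NK.
  exists (Num.min b (\sum_(N <= j < K) a j)); split.
    by rewrite lt_min b0 hpos.
  move=> i; rewrite ltnS leq_eqVlt => /orP[/eqP ->|iN] iK.
    by rewrite ge_min lexx orbT.
  by rewrite ge_min hb.
exists b; split => // i; rewrite ltnS leq_eqVlt => /orP[/eqP ->|iN] iK.
  by move: iK; rewrite ltnNge NK.
exact: hb.
Qed.


Ltac fld := field; repeat (apply/andP; split); rewrite ?mulf_neq0 ?expf_neq0 //.

Section Final.
Variable R : realType.

Lemma rho_sq_bound (kp Ls L0 lam : R) (k : nat) :
  0 < kp -> 0 < Ls -> 0 <= L0 -> 4 * L0 / kp < lam ->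
  (Num.max (L0 - kp / 4 * k%:R) Ls) ^+ 2
    <= Ls ^+ 2 + L0 ^+ 2 * ((k%:R - lam) / (lam - 4 * L0 / kp)) ^+ 2.
Proof.
move=> hk hLs hL0 hlam.
set kst := 4 * L0 / kp in hlam *.
have hk0 : (0 : R) <= k%:R by rewrite ler0n.
rewrite maxEle; case: (leP (L0 - kp / 4 * k%:R) Ls) => h.
  have := sqr_ge0 L0; have := sqr_ge0 ((k%:R - lam) / (lam - kst)); nra.
have hkk : k%:R < kst.
  have h1 : kp / 4 * k%:R < L0 by lra.
  have e : k%:R * kp = 4 * (kp / 4 * k%:R) by field.
  rewrite /kst ltr_pdivlMr // e; lra.
set q := (k%:R - lam) / (lam - kst).
have hd : 0 < lam - kst by lra.
have hq : q <= -1.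
  by rewrite /q ler_pdivrMr //; lra.
have hr : L0 - kp / 4 * k%:R <= L0.
  have : 0 <= kp / 4 * k%:R by rewrite mulr_ge0 // divr_ge0 // ltW.
  lra.
have hq2 : 1 <= q ^+ 2 by nra.
have hLq : L0 ^+ 2 <= L0 ^+ 2 * q ^+ 2.
  by rewrite -[X in X <= _]mulr1 ler_wpM2l // sqr_ge0.
have hsq : (L0 - kp / 4 * k%:R) ^+ 2 <= L0 ^+ 2.
  have : 0 < L0 - kp / 4 * k%:R by lra.
  nra.
have := sqr_ge0 Ls; lra.
Qed.

Lemma arithA (K n L beta sq cc t z Ls : R) :
  1 <= n -> 0 < sq -> sq ^+ 2 = n -> 0 < beta -> 0 <= cc -> 0 <= K ->
  0 <= L -> L <= n * (cc + 1) -> 1 <= t * z -> Ls = K * L / (sq * beta) ->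
  2 * Ls ^+ 2 / n <= 2 * K ^+ 2 * (cc + 1) ^+ 2 / beta ^+ 2 * (t * z).
Proof.
move=> hn hsq esq hb hcc hK hL0 hL htz eLs.
have hn0 : 0 < n by lra.
have sq0 : sq != 0 by rewrite gt_eqF.
have b0 : beta != 0 by rewrite gt_eqF.
have eA : 2 * Ls ^+ 2 / n = 2 * K ^+ 2 * (L / n) ^+ 2 / beta ^+ 2.
  rewrite eLs -esq; fld.
rewrite eA.
have hLn : L / n <= cc + 1 by rewrite ler_pdivrMr // mulrC.
have hLn0 : 0 <= L / n by rewrite divr_ge0 // ltW.
have h2 : (L / n) ^+ 2 <= (cc + 1) ^+ 2 by nra.
have hC : 0 <= 2 * K ^+ 2 / beta ^+ 2.
  apply: divr_ge0; [apply: mulr_ge0; [lra | exact: sqr_ge0] | exact: sqr_ge0].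
have e1 : 2 * K ^+ 2 * (L / n) ^+ 2 / beta ^+ 2 = 2 * K ^+ 2 / beta ^+ 2 * (L / n) ^+ 2.
  by rewrite mulrAC.
have e2 : 2 * K ^+ 2 * (cc + 1) ^+ 2 / beta ^+ 2 = 2 * K ^+ 2 / beta ^+ 2 * (cc + 1) ^+ 2.
  by rewrite mulrAC.
rewrite e1 e2.
have g1 := ler_wpM2l hC h2.
have hC1 : 0 <= 2 * K ^+ 2 / beta ^+ 2 * (cc + 1) ^+ 2 by rewrite mulr_ge0 ?sqr_ge0.
apply: (le_trans g1).
rewrite -[X in X <= _]mulr1; exact: ler_wpM2l.
Qed.

Lemma arithB (n L cc t z : R) :
  1 <= n -> 0 <= L -> L <= n * (cc + 1) -> 0 <= t -> 0 <= z ->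
  10 / n * (L * (z * t)) <= 10 * (cc + 1) * (t * z).
Proof.
move=> hn hL0 hL ht hz.
have hn0 : 0 < n by lra.
have hLn : L / n <= cc + 1 by rewrite ler_pdivrMr // mulrC.
have n0 : n != 0 by rewrite gt_eqF.
have e : 10 / n * (L * (z * t)) = 10 * (L / n) * (t * z) by fld.
rewrite e; apply: ler_wpM2r; first by rewrite mulr_ge0.
by rewrite ler_pM2l.
Qed.

Lemma arithC (K n L z t L0 lam kst : R) :
  1 <= n -> 0 <= K -> 1 <= L -> 1 <= t -> 0 < z ->
  lam = L * (z * t) -> 0 <= L0 -> L0 ^+ 2 <= K ^+ 2 * n * z ^+ 2 ->
  lam / 2 <= lam - kst ->
  2 * L0 ^+ 2 / (n * (lam - kst) ^+ 2) * lam <= 8 * K ^+ 2 * (t * z).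
Proof.
move=> hn hK hL ht hz elam hL0 hw hd.
have hn0 : 0 < n by lra.
have hlam : 0 < lam by rewrite elam !mulr_gt0 //; lra.
have hd0 : 0 < lam - kst by lra.
have hd2 : 0 < (lam - kst) ^+ 2 by rewrite exprn_gt0.
have n0 : n != 0 by rewrite gt_eqF.
have dd0 : lam - kst != 0 by rewrite gt_eqF.
have e : 2 * L0 ^+ 2 / (n * (lam - kst) ^+ 2) * lam = (2 * L0 ^+ 2 * lam) / (n * (lam - kst) ^+ 2).
  by fld.
rewrite e ler_pdivrMr ?mulr_gt0 //.
have g1 : 2 * L0 ^+ 2 * lam <= 2 * (K ^+ 2 * n * z ^+ 2) * lam.
  apply: ler_wpM2r; first exact: ltW.
  by apply: ler_wpM2l; [lra | exact: hw].
apply: (le_trans g1).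
have g2 : lam ^+ 2 <= 4 * (lam - kst) ^+ 2 by nra.
have hKn : 0 <= K ^+ 2 * n by rewrite mulr_ge0 ?sqr_ge0 // ltW.
have g3 : 2 * (K ^+ 2 * n * z ^+ 2) * lam <= 2 * (K ^+ 2 * n) * z * t * lam ^+ 2.
  have e2 : 2 * (K ^+ 2 * n) * z * t * lam ^+ 2
            = 2 * (K ^+ 2 * n * z ^+ 2) * lam * (L * t * t) by rewrite elam; ring.
  rewrite e2 -[X in X <= _]mulr1 ler_wpM2l //.
    by rewrite !mulr_ge0 ?sqr_ge0 ?ler0n // ltW.
  have : 1 <= t * t by nra.
  nra.
apply: (le_trans g3).
have hc : 0 <= 2 * (K ^+ 2 * n) * z * t by rewrite !mulr_ge0 ?ler0n //; lra.
have g4 := ler_wpM2l hc g2.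
apply: (le_trans g4).
have -> : 2 * (K ^+ 2 * n) * z * t * (4 * (lam - kst) ^+ 2)
        = 8 * K ^+ 2 * (t * z) * (n * (lam - kst) ^+ 2) by ring.
by [].
Qed.

End Final.



Lemma zsq_ge0 (R : realType) K n x : 0 <= zsq R K n x.
Proof. by rewrite /zsq divr_ge0 ?ler0n // sumr_ge0 // => j _; rewrite sqr_ge0. Qed.

Lemma e2_aux (R : realType) (Ls L0 n lam d k : R) : n != 0 -> d != 0 ->
  2 * Ls ^+ 2 / n + 10 / n * k + 2 * L0 ^+ 2 / (n * d ^+ 2) * (k - lam) ^+ 2
  = (2 * (Ls ^+ 2 + L0 ^+ 2 * ((k - lam) / d) ^+ 2) + 10 * k) / n.
Proof. move=> n0 d0; fld. Qed.

Theorem lemma6p1 (R : realType) (K : nat) (a : nat -> R) :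
  (2 <= K)%N ->
  (forall i : nat, (i < K)%N -> 0 < \sum_(i <= j < K) a j) ->
  exists t0 D3 : R, 0 < t0 /\ 0 < D3 /\
    forall t : R, t0 <= t ->
    forall n : nat, (forall l : nat, (l < K)%N -> (Num.max (a l) 0) ^+ 2 < n%:R) ->
    forall m : nat -> nat, (forall j : nat, (K <= j)%N -> m j = 0%N) ->
      (@Ezt R K a n (@znorm R K n m * t) (@zsq R K n) m
       <= (D3 * (t * @znorm R K n m
                 + (1 + t ^+ 2 * (@znorm R K n m ^+ 2 + 1)) / n%:R))%:E)%E.
Proof.
move=> K2 hpos.
have [be [hbe hB]] := @beta_exists R K a hpos.
pose cc := c0 R K a.
have cc0 : 0 <= cc := c0_ge0 R K a.
have hK0 : (0 < K)%N := ltn_trans (ltnSn 0) K2.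
have hK1 : (1 : R) <= K%:R by rewrite ler1n.
have hKK : 0 <= K%:R ^+ 2 :> R by rewrite sqr_ge0.
pose C1 := 2 * K%:R ^+ 2 * (cc + 1) ^+ 2 / be ^+ 2.
have hC1 : 0 <= C1.
  rewrite /C1; apply: divr_ge0; last exact: sqr_ge0.
  by apply: mulr_ge0; [apply: mulr_ge0; [lra | exact: hKK] | exact: sqr_ge0].
pose D3 := C1 + 10 * (cc + 1) + 9 * K%:R ^+ 2 + cc + 1.
have hD3 : 0 < D3 by rewrite /D3; lra.
pose q := 4 * K%:R ^+ 2 / be.
have hq : 0 <= q by rewrite /q divr_ge0 ?mulr_ge0 // ?ltW //; lra.
exists (1 + q), D3; split; first lra.
split; first exact: hD3.
move=> t ht n hn m hm.
have ht1 : 1 <= t by lra.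
have hn1 : (1 : R) <= n%:R := n_ge1 R K a n K2 hn.
have hn0 : (0 : R) < n%:R by lra.
have n0 : (n%:R : R) != 0 by rewrite gt_eqF.
pose z := znorm R K n m.
pose L := Lam K a n.
pose lam := L * (z * t).
have hz0 : 0 <= z := sqrtr_ge0 _.
have ez : z ^+ 2 = zsq R K n m by rewrite /z /znorm sqr_sqrtr // zsq_ge0.
have hL1 : 1 <= L := Lam_ge1 R K a n.
have hL0 : 0 <= L by lra.
have hLle : L <= n%:R * (cc + 1) := Lam_le R K a n K2 hn.
have lam0 : 0 <= lam by rewrite /lam !mulr_ge0 //; lra.
have hsq0 : 0 < sq R n := sq_gt0 R K a n K2 hn.
have esq : sq R n ^+ 2 = n%:R := sq_sq R n.
pose M := \sum_(j < K) ((m j)%:R : R).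
have hM0 : 0 <= M by apply: sumr_ge0 => j _; rewrite ler0n.
have hX : forall i : 'I_K, Xr R m i <= M.
  move=> i; rewrite /Xr /M -natr_sum ler_nat.
  have hi : (i <= K.-1)%N by rewrite -ltnS prednK ?ltn_ord.
  apply: (@leq_trans (Xq m K.-1)); first exact: (@Xq_mono m i K.-1 hi).
  by rewrite /Xq prednK.
have hPhi : Phi K R m <= K%:R ^+ 2 * n%:R * z ^+ 2.
  have h1 : Phi K R m <= K%:R * M ^+ 2.
    apply: (@le_trans _ _ (\sum_(i < K) M ^+ 2)); last first.
      by rewrite sumr_const card_ord mulr_natl.
    apply: ler_sum => i _.
    have := hX i; have : 0 <= Xr R m i by rewrite /Xr ler0n.
    nra.
  have h2 : M ^+ 2 <= K%:R * \sum_(j < K) (m j)%:R ^+ 2 := @cauchy_sum R K (fun j => (m j)%:R).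
  have h3 : \sum_(j < K) ((m j)%:R : R) ^+ 2 = n%:R * z ^+ 2.
    by rewrite ez /zsq; fld.
  rewrite h3 in h2.
  have h4 : K%:R * M ^+ 2 <= K%:R * (n%:R * z ^+ 2 * K%:R).
    by apply: ler_wpM2l; [lra | rewrite mulrC].
  apply: (le_trans h1); apply: (le_trans h4).
  rewrite le_eqVlt; apply/orP; left; apply/eqP; ring.
have eL0 : Lf R K m ^+ 2 = Phi K R m by rewrite /Lf sqr_sqrtr // Phi_ge0.
have L0le : Lf R K m <= K%:R * sq R n * z.
  apply: sqrt_le_of; first by rewrite !mulr_ge0 // ?ltW //; lra.
  have -> : (K%:R * sq R n * z) ^+ 2 = K%:R ^+ 2 * (sq R n ^+ 2) * z ^+ 2 by ring.
  by rewrite esq.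
have iter0 : forall k, 0 <= iter k (step K a n) (zsq R K n) m.
  move=> k.
  have := @iter_mono R K a n K2 hn k (fun y => 0 * zsq R K n y + 0) (zsq R K n) _ m.
  rewrite iter_affine mul0r add0r; apply.
  by move=> y; rewrite mul0r add0r zsq_ge0.
have term0 : forall k, 0 <= expR (- lam) * lam ^+ k / (k`!)%:R
                           * iter k (step K a n) (zsq R K n) m.
  move=> k; apply: mulr_ge0 => //.
  by rewrite divr_ge0 ?ler0n // mulr_ge0 ?expR_ge0 // exprn_ge0.
have key : forall N, \sum_(0 <= k < N) (expR (- lam) * lam ^+ k / (k`!)%:R
                         * iter k (step K a n) (zsq R K n) m) <= D3 * (t * z).
  move=> N; case: (leP z t) => hzt.
    have hu : forall k, iter k (step K a n) (zsq R K n) m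
                <= Phi K R m / n%:R + 1 / n%:R * k%:R + 0 * (k%:R - lam) ^+ 2.
      move=> k; have h := @iter_crude_zsq R K a n K2 hn be hbe hB k m.
      have -> : Phi K R m / n%:R + 1 / n%:R * k%:R + 0 * (k%:R - lam) ^+ 2
              = (Phi K R m + k%:R) / n%:R by ring.
      exact: h.
    have hA : 0 <= Phi K R m / n%:R by rewrite divr_ge0 ?ler0n ?Phi_ge0.
    have hB' : 0 <= 1 / n%:R :> R by rewrite divr_ge0 ?ler0n.
    apply: (le_trans (@poisson_bound R lam lam0 (Phi K R m / n%:R) (1 / n%:R) 0
               (fun k => iter k (step K a n) (zsq R K n) m) hA hB' (lexx 0) hu N)).
    have g1 : Phi K R m / n%:R <= K%:R ^+ 2 * (t * z).
      rewrite ler_pdivrMr //.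
      apply: (le_trans hPhi).
      have : z ^+ 2 <= t * z by nra.
      move=> h; have := ler_wpM2l hKK h.
      have -> : K%:R ^+ 2 * n%:R * z ^+ 2 = K%:R ^+ 2 * z ^+ 2 * n%:R by ring.
      move=> h'; rewrite ler_wpM2r ?ler0n //.
    have g2 : 1 / n%:R * lam <= (cc + 1) * (t * z).
      have hLn : L / n%:R <= cc + 1 by rewrite ler_pdivrMr // mulrC.
      have -> : 1 / n%:R * lam = L / n%:R * (t * z).
        rewrite /lam; ring.
      by apply: ler_wpM2r => //; rewrite mulr_ge0 //; lra.
    have g3 : (K%:R ^+ 2 + (cc + 1)) * (t * z) <= D3 * (t * z).
      apply: ler_wpM2r; first by rewrite mulr_ge0 //; lra.
      by rewrite /D3; lra.
    lra.
  have hz : 0 < z by lra.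
  pose L0 := Lf R K m.
  have hL00 : 0 <= L0 := Lf_ge0 R K m.
  pose kp := kap R K a n be.
  have hkp : 0 < kp := kap_gt0 R K a n K2 hn be hbe.
  have be0 : be != 0 by rewrite gt_eqF.
  have sq0 : sq R n != 0 by rewrite gt_eqF.
  have K0 : (K%:R : R) != 0 by rewrite gt_eqF //; lra.
  have L00 : L != 0 by rewrite gt_eqF //; lra.
  pose Ls := Lstar R K a n be.
  have eLs : Ls = K%:R * L / (sq R n * be).
    rewrite /Ls /Lstar /kap /L; fld.
  have hLs : 0 < Ls by rewrite /Ls /Lstar divr_gt0.
  pose kst := 4 * L0 / kp.
  have hkst : kst <= 2 * K%:R ^+ 2 * L * z / be.
    have e : kst = 2 * K%:R * L / (sq R n * be) * L0 by rewrite /kst /kp /kap /L; fld.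
    rewrite e.
    have hc : 0 <= 2 * K%:R * L / (sq R n * be).
      rewrite divr_ge0 ?mulr_ge0 ?ltW //; lra.
    apply: (le_trans (ler_wpM2l hc L0le)).
    rewrite le_eqVlt; apply/orP; left; apply/eqP; rewrite /L /z; fld.
  have hlam2 : 2 * kst <= lam.
    have h1 : q <= t by lra.
    have h2 : L * z * q <= L * z * t by apply: ler_wpM2l => //; rewrite mulr_ge0.
    have e : L * z * q = 2 * (2 * K%:R ^+ 2 * L * z / be) by rewrite /q /L /z; fld.
    have e2 : lam = L * z * t by rewrite /lam mulrA.
    lra.
  have hlam_pos : 0 < lam by rewrite /lam !mulr_gt0 //; lra.
  have hkst_lt : kst < lam by lra.
  have hd : lam / 2 <= lam - kst by lra.
  have d0 : lam - kst != 0 by rewrite gt_eqF //; lra.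
  pose A := 2 * Ls ^+ 2 / n%:R.
  pose B := 10 / n%:R : R.
  pose C := 2 * L0 ^+ 2 / (n%:R * (lam - kst) ^+ 2).
  have hu : forall k, iter k (step K a n) (zsq R K n) m
              <= A + B * k%:R + C * (k%:R - lam) ^+ 2.
    move=> k.
    have h1 := @iter_main R K a n K2 hn be hbe hB L0 k m (lexx _).
    have h2 := @rho_sq_bound R kp Ls L0 lam k hkp hLs hL00 hkst_lt.
    have e : rho R K a n be L0 k = Num.max (L0 - kp / 4 * k%:R) Ls by [].
    rewrite e in h1.
    set qq := (k%:R - lam) / (lam - 4 * L0 / kp) in h2.
    have e2 : A + B * k%:R + C * (k%:R - lam) ^+ 2
              = (2 * (Ls ^+ 2 + L0 ^+ 2 * qq ^+ 2) + 10 * k%:R) / n%:R.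
      rewrite /A /B /C /qq; exact: e2_aux.
    rewrite e2; apply: (le_trans h1).
    apply: ler_wpM2r; first by rewrite invr_ge0 ler0n.
    lra.
  have hA : 0 <= A by rewrite /A divr_ge0 ?ler0n // mulr_ge0 ?sqr_ge0 //.
  have hB' : 0 <= B by rewrite /B divr_ge0 ?ler0n.
  have hC : 0 <= C.
    rewrite /C; apply: divr_ge0; first by apply: mulr_ge0; [lra | exact: sqr_ge0].
    by apply: mulr_ge0; [exact: ler0n | exact: sqr_ge0].
  apply: (le_trans (@poisson_bound R lam lam0 A B C
             (fun k => iter k (step K a n) (zsq R K n) m) hA hB' hC hu N)).
  have htz : 1 <= t * z by nra.
  have gA : A <= C1 * (t * z).
    exact: (@arithA R K%:R n%:R L be (sq R n) cc t z Ls hn1 hsq0 esq hbe cc0 (ler0n _ _) hL0 hLle htz eLs).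
  have gB : B * lam <= 10 * (cc + 1) * (t * z).
    by apply: (@arithB R n%:R L cc t z hn1 hL0 hLle) => //; lra.
  have hw : L0 ^+ 2 <= K%:R ^+ 2 * n%:R * z ^+ 2 by rewrite /L0 eL0.
  have gC : C * lam <= 8 * K%:R ^+ 2 * (t * z).
    exact: (@arithC R K%:R n%:R L z t L0 lam kst hn1 (ler0n _ _) hL1 ht1 hz erefl hL00 hw hd).
  have g : (C1 + 10 * (cc + 1) + 8 * K%:R ^+ 2) * (t * z) <= D3 * (t * z).
    apply: ler_wpM2r; first by rewrite mulr_ge0 //; lra.
    by rewrite /D3; lra.
  lra.
apply: (@le_trans _ _ ((D3 * (t * z))%:E)).
  exact: (@eser_le R (fun k => expR (- lam) * lam ^+ k / (k`!)%:R
                        * iter k (step K a n) (zsq R K n) m) (D3 * (t * z)) term0 key).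
rewrite lee_fin; apply: ler_wpM2l; first exact: ltW.
rewrite lerDl divr_ge0 ?ler0n // addr_ge0 // mulr_ge0 ?sqr_ge0 // addr_ge0 ?sqr_ge0 //.
Qed.
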